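(* Let $n\in\mathbf{N}$, $b\in\mathbf{N}$ and $\ell\in\mathbf{N}$. There exists $C>0$ such that $\|m^1_{b,\ell,L}(\cdot,t)\|_{L^2(\mathbf{R}^n_\xi)}\le Ct^{2(b-1)}e^{-t/2}+Ct^{-\frac n4-\ell}$ for all $t\ge1$.
   Context: Expressions $\cos(t\sqrt z)$ denote the entire function $\sum_m(-1)^mt^{2m}z^m/(2m)!$ of $z\in\mathbf{R}$ (equal to $\cosh(t\sqrt{-z})$ for $z<0$). For $r\ge0$, $c\in\mathbf{R}$, $a\in[0,1]$ with $4ar^2<1$, $t>0$: $f(r,c,t)=\cos(t\sqrt{r^2-c})$, $g(r,a,t)=\exp(-\frac{2tr^2}{1+\sqrt{1-4ar^2}})$. For $\xi\neq0$: $W^1_b(\xi,t)=\sum_{k=0}^{b-1}(\frac14)^k\frac1{k!}\partial_c^kf(|\xi|,0,t)$, $D^1_\ell(\xi,t)=\frac12\sum_{k=0}^{\ell-1}\frac1{k!}\partial_a^kg(|\xi|,0,t)$. Let $\chi_L$ be a smooth function on $[0,\infty)$ with $\chi_L(r)=0$ for $r\ge\frac13$ and $\chi_L(r)=1$ for $r\le\frac14$. Define $m^1_{b,\ell,L}(\xi,t)=\chi_L(|\xi|)\big[e^{-t/2}\cos(t\sqrt{|\xi|^2-\frac14})-e^{-t/2}W^1_b(\xi,t)-D^1_\ell(\xi,t)\big]$. *)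

(* Defs.v *)
From Stdlib Require Import Reals Lra List ClassicalEpsilon Factorial.
Open Scope R_scope.

(* The entire function z |-> cos(t sqrt z) (= cosh(t sqrt(-z)) for z < 0). *)
Definition cosqrt (t z : R) : R :=
  if Rle_dec 0 z then cos (t * sqrt z) else cosh (t * sqrt (- z)).

(* Derivative of f at x (the unique l with derivable_pt_lim f x l; 0 if none). *)
Definition deriv (f : R -> R) (x : R) : R :=
  match excluded_middle_informative (exists l, derivable_pt_lim f x l) with
  | left H => proj1_sig (constructive_indefinite_description _ H)
  | right _ => 0
  end.

Definition nth_deriv (k : nat) (f : R -> R) : R -> R := Nat.iter k deriv f.

Definition smooth (h : R -> R) : Prop :=
  exists F : nat -> R -> R, F 0%nat = h /\
    forall k x, derivable_pt_lim (F k) x (F (S k) x).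

Fixpoint sumk (n : nat) (F : nat -> R) : R :=
  match n with O => 0 | S k => sumk k F + F k end.

Definition f_fun (r c t : R) : R := cosqrt t (r ^ 2 - c).
Definition g_fun (r a t : R) : R :=
  exp (- (2 * t * r ^ 2) / (1 + sqrt (1 - 4 * a * r ^ 2))).

(* W^1_b and D^1_l, as functions of r = |xi| *)
Definition W1 (b : nat) (r t : R) : R :=
  sumk b (fun k => (/ 4) ^ k * / INR (fact k) * nth_deriv k (fun c => f_fun r c t) 0).
Definition D1 (l : nat) (r t : R) : R :=
  / 2 * sumk l (fun k => / INR (fact k) * nth_deriv k (fun a => g_fun r a t) 0).

(* m^1_{b,l,L}, as a function of r = |xi| *)
Definition m1 (chi : R -> R) (b l : nat) (r t : R) : R :=
  chi r * (exp (- t / 2) * cosqrt t (r ^ 2 - / 4)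
           - exp (- t / 2) * W1 b r t - D1 l r t).

(* Riemann integral on [a,b] (0 if not Riemann integrable) *)
Definition RInt (f : R -> R) (a b : R) : R :=
  match excluded_middle_informative (exists pr : Riemann_integrable f a b, True) with
  | left H => RiemannInt (proj1_sig (constructive_indefinite_description _ H))
  | right _ => 0
  end.

(* Iterated integral over the box [-1,1]^n; points of R^n are lists of length n *)
Fixpoint box_int (n : nat) (F : list R -> R) : R :=
  match n with
  | O => F nil
  | S k => RInt (fun x => box_int k (fun v => F (x :: v))) (-1) 1
  end.

Definition normv (v : list R) : R := sqrt (fold_right (fun x s => x * x + s) 0 v).

(* L^2(R^n) norm of a function supported in the unit ball *)
Definition L2norm (n : nat) (F : list R -> R) : R :=
  sqrt (box_int n (fun v => (F v) ^ 2)).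

(* Main.v *)
Require Import Defs.
From Stdlib Require Import Reals List Lra Psatz Lia Factorial ClassicalEpsilon.
From Coquelicot Require Import Coquelicot.
Open Scope R_scope.


Lemma fact_pos_R : forall n, 0 < INR (fact n).
Proof. intro n; apply lt_0_INR, lt_O_fact. Qed.

Lemma rad_cos : CV_radius cos_n = p_infty.
Proof.
  apply CV_radius_infinite_DAlembert.
  - intro n; unfold cos_n. apply Rmult_integral_contrapositive_currified.
    apply pow_nonzero; lra. apply Rinv_neq_0_compat. apply Rgt_not_eq, fact_pos_R.
  - apply is_lim_seq_le_le with (u := fun _ => 0) (w := fun n => / INR (S n)).
    + intro n. unfold cos_n.
      replace (2 * S n)%nat with (S (S (2 * n))) by lia.
      rewrite !fact_simpl, !mult_INR.
      pose proof (fact_pos_R (2*n)).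
      assert (E1 : INR (S (S (2*n))) = 2 * INR n + 2) by (rewrite !S_INR, mult_INR; simpl; ring).
      assert (E2 : INR (S (2*n)) = 2 * INR n + 1) by (rewrite !S_INR, mult_INR; simpl; ring).
      assert (E3 : INR (S n) = INR n + 1) by (rewrite S_INR; ring).
      rewrite E1, E2, E3. set (F := INR (fact (2*n))) in *.
      assert (0 <= INR n) by apply pos_INR.
      replace ((-1) ^ S n / ((2 * INR n + 2) * ((2 * INR n + 1) * F)) / ((-1) ^ n / F))
        with (- / ((2 * INR n + 2) * (2 * INR n + 1)))
        by (simpl; field; repeat split; try apply pow_nonzero; lra).
      rewrite Rabs_Ropp, Rabs_right.
      2: { apply Rle_ge, Rlt_le, Rinv_0_lt_compat. nra. }
      split. apply Rlt_le, Rinv_0_lt_compat. nra.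
      apply Rinv_le_contravar. lra. nra.
    + apply is_lim_seq_const.
    + apply (is_lim_seq_incr_1 (fun n => / INR n) 0).
      replace (Finite 0) with (Rbar_inv p_infty) by reflexivity.
      apply is_lim_seq_inv. apply is_lim_seq_INR. discriminate.
Qed.

Definition Dk (k : nat) : nat -> R := Nat.iter k PS_derive cos_n.
Definition Cf (k : nat) (y : R) : R := PSeries (Dk k) y.

Lemma rad_Dk : forall k, CV_radius (Dk k) = p_infty.
Proof. induction k. apply rad_cos. simpl. rewrite CV_radius_derive. exact IHk. Qed.

Lemma Cf_deriv : forall k y, derivable_pt_lim (Cf k) y (Cf (S k) y).
Proof.
  intros k y. apply is_derive_Reals. unfold Cf. simpl.
  apply is_derive_PSeries. rewrite rad_Dk. exact I.
Qed.

Lemma Dk_bound : forall k n, Rabs (Dk k n) <= / INR (fact (2*n)).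
Proof.
  induction k; intro n.
  - change (Dk 0 n) with (cos_n n). unfold cos_n, Rdiv. rewrite Rabs_mult, pow_1_abs, Rabs_right. lra.
    apply Rle_ge, Rlt_le, Rinv_0_lt_compat, fact_pos_R.
  - change (Dk (S k) n) with (PS_derive (Dk k) n). unfold PS_derive.
    rewrite Rabs_mult, Rabs_right by (apply Rle_ge, pos_INR).
    eapply Rle_trans. apply Rmult_le_compat_l. apply pos_INR. apply IHk.
    replace (2 * S n)%nat with (S (S (2 * n))) by lia.
    rewrite !fact_simpl, !mult_INR.
    pose proof (fact_pos_R (2*n)).
    assert (E1 : INR (S (S (2*n))) = 2 * INR n + 2) by (rewrite !S_INR, mult_INR; simpl; ring).
    assert (E2 : INR (S (2*n)) = 2 * INR n + 1) by (rewrite !S_INR, mult_INR; simpl; ring).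
    assert (E3 : INR (S n) = INR n + 1) by (rewrite S_INR; ring).
    rewrite E1, E2, E3. set (F := INR (fact (2*n))) in *.
    assert (0 <= INR n) by apply pos_INR.
    replace ((INR n + 1) * / ((2 * INR n + 2) * ((2 * INR n + 1) * F)))
      with ((/ (2 * (2 * INR n + 1))) * / F) by (field; lra).
    rewrite <- (Rmult_1_l (/ F)) at 2.
    apply Rmult_le_compat_r. apply Rlt_le, Rinv_0_lt_compat; lra.
    rewrite <- Rinv_1. apply Rinv_le_contravar; lra.
Qed.


Lemma PSeries_R_eq : forall a x, PSeries a x = Series (fun n => a n * x ^ n).
Proof. intros. unfold PSeries. apply Series_ext. intro n. reflexivity. Qed.

Lemma ex_ps_le (a : nat -> R) y : (forall n, Rabs (a n) <= / INR (fact (2*n))) -> ex_pseries a y.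
Proof.
  intro H. apply ex_pseries_R.
  apply (@ex_series_le R_AbsRing R_CompleteNormedModule _ (fun n => Rabs (cos_n n * (-y)^n))).
  - intro n. change norm with Rabs. simpl norm.
    rewrite !Rabs_mult. apply Rmult_le_compat; try apply Rabs_pos.
    + eapply Rle_trans. apply H. unfold cos_n, Rdiv. rewrite Rabs_mult, pow_1_abs.
      rewrite (Rabs_right (/ _)). lra. apply Rle_ge, Rlt_le, Rinv_0_lt_compat, fact_pos_R.
    + rewrite <- !RPow_abs, Rabs_Ropp. lra.
  - apply CV_disk_inside. rewrite rad_cos. exact I.
Qed.

Lemma cos_Cf : forall x, cos x = Cf 0 (x^2).
Proof.
  intro x. unfold cos. destruct (exist_cos (Rsqr x)) as [l Hl]. unfold cos_in in Hl.
  symmetry. unfold Cf. change (Dk 0) with cos_n. apply is_pseries_unique.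
  apply is_pseries_R. apply is_series_Reals.
  replace (x^2) with (Rsqr x) by (unfold Rsqr; ring). exact Hl.
Qed.

Lemma cosh_Cf : forall x, cosh x = Cf 0 (-(x^2)).
Proof.
  intro x. set (a := fun n => / INR (fact n)).
  assert (Hfa : forall n, 0 < a n) by (intro n; apply Rinv_0_lt_compat, fact_pos_R).
  assert (Ee : ex_pseries (fun n => a (2*n)%nat) (x^2)).
  { apply ex_ps_le. intro n. rewrite Rabs_right. apply Rle_refl. apply Rle_ge, Rlt_le, Hfa. }
  assert (Eo : ex_pseries (fun n => a (2*n+1)%nat) (x^2)).
  { apply ex_ps_le. intro n. rewrite Rabs_right. 2: apply Rle_ge, Rlt_le, Hfa.
    unfold a. apply Rinv_le_contravar. apply fact_pos_R. apply le_INR.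
    apply fact_le. lia. }
  pose proof (PSeries_correct _ _ Ee) as H1. pose proof (PSeries_correct _ _ Eo) as H2.
  pose proof (is_pseries_odd_even a x _ _ H1 H2) as Hp.
  assert (H1' := H1). assert (H2' := H2).
  replace (x^2) with ((-x)^2) in H1', H2' by ring.
  pose proof (is_pseries_odd_even a (-x) _ _ H1' H2') as Hm.
  pose proof (is_exp_Reals x) as Ex. pose proof (is_exp_Reals (-x)) as Emx.
  apply is_pseries_unique in Hp, Hm, Ex, Emx.
  unfold cosh. rewrite <- Ex, <- Emx. fold a. rewrite Hp, Hm.
  replace ((PSeries (fun n : nat => a (2 * n)%nat) (x ^ 2) +
   x * PSeries (fun n : nat => a (2 * n + 1)%nat) (x ^ 2) +
   (PSeries (fun n : nat => a (2 * n)%nat) ((- x) ^ 2) +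
    - x * PSeries (fun n : nat => a (2 * n + 1)%nat) ((- x) ^ 2))) / 2)
   with (PSeries (fun n : nat => a (2 * n)%nat) (x ^ 2))
   by (replace ((-x)^2) with (x^2) by ring; field).
  unfold Cf. change (Dk 0) with cos_n. rewrite !PSeries_R_eq. apply Series_ext.
  intro n. unfold a, cos_n. replace (- x^2) with ((-1) * x^2) by ring.
  rewrite Rpow_mult_distr. unfold Rdiv.
  replace ((-1) ^ n * / INR (fact (2 * n)) * ((-1) ^ n * (x ^ 2) ^ n)) with
    (((-1) * (-1))^n * / INR (fact (2 * n)) * ((x ^ 2) ^ n)) by (rewrite Rpow_mult_distr; ring).
  replace ((-1) * (-1)) with 1 by ring. rewrite pow1. ring.
Qed.

Lemma cosqrt_Cf : forall t z, cosqrt t z = Cf 0 (t^2 * z).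
Proof.
  intros t z. unfold cosqrt. destruct (Rle_dec 0 z) as [Hz|Hz].
  - rewrite cos_Cf. f_equal. rewrite Rpow_mult_distr. rewrite pow2_sqrt by lra. ring.
  - rewrite cosh_Cf. f_equal. rewrite Rpow_mult_distr. rewrite pow2_sqrt by lra. ring.
Qed.


Lemma exp_le_exp : forall x y, x <= y -> exp x <= exp y.
Proof. intros x y H. destruct (Rle_lt_or_eq_dec x y H). apply Rlt_le, exp_increasing; auto. subst; lra. Qed.

Lemma deriv_eq : forall f x l, derivable_pt_lim f x l -> deriv f x = l.
Proof.
  intros f x l H. unfold deriv.
  destruct (excluded_middle_informative _) as [E|E].
  - destruct (constructive_indefinite_description _ E) as [l' H']. simpl.
    eapply uniqueness_limite; eauto.
  - exfalso; apply E; exists l; exact H.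
Qed.

Lemma derivable_loc : forall f g x l d, d > 0 ->
  (forall y, Rabs (y - x) < d -> f y = g y) ->
  derivable_pt_lim f x l -> derivable_pt_lim g x l.
Proof.
  intros f g x l d Hd Heq H eps Heps.
  destruct (H eps Heps) as [del Hdel].
  assert (Hm : 0 < Rmin del d) by (apply Rmin_pos; [apply del | lra]).
  exists (mkposreal _ Hm). intros h Hh0 Hh. simpl in Hh.
  rewrite <- !Heq. apply Hdel; auto. eapply Rlt_le_trans; [exact Hh|apply Rmin_l].
  rewrite Rminus_diag, Rabs_R0; lra.
  replace (x + h - x) with h by ring. eapply Rlt_le_trans; [exact Hh|apply Rmin_r].
Qed.

Lemma nth_deriv_family : forall (F : nat -> R -> R) (f : R -> R) al be,
  (forall x, al < x < be -> f x = F 0%nat x) ->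
  (forall k x, al < x < be -> derivable_pt_lim (F k) x (F (S k) x)) ->
  forall k x, al < x < be -> nth_deriv k f x = F k x.
Proof.
  intros F f al be H0 HD k. induction k; intros x Hx.
  - apply H0; exact Hx.
  - change (nth_deriv (S k) f x) with (deriv (nth_deriv k f) x).
    apply deriv_eq. apply derivable_loc with (f := F k) (d := Rmin (x - al) (be - x)).
    + apply Rmin_pos; lra.
    + intros y Hy. symmetry. apply IHk.
      assert (Rabs (y - x) < x - al) by (eapply Rlt_le_trans; [exact Hy|apply Rmin_l]).
      assert (Rabs (y - x) < be - x) by (eapply Rlt_le_trans; [exact Hy|apply Rmin_r]).
      apply Rabs_def2 in H. apply Rabs_def2 in H1. lra.
    + apply HD; exact Hx.
Qed.

Lemma Cf_bound : forall k y, 0 <= y -> Rabs (Cf k y) <= exp (sqrt y).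
Proof.
  intros k y Hy. unfold Cf. rewrite PSeries_R_eq.
  assert (Hin : Rbar_lt (Rabs y) (CV_radius (Dk k))) by (rewrite rad_Dk; exact I).
  eapply Rle_trans. apply Series_Rabs.
  pose proof (CV_disk_inside _ _ Hin) as E. exact E.
  assert (Hc : Rbar_lt (Rabs (-y)) (CV_radius cos_n)) by (rewrite rad_cos; exact I).
  pose proof (CV_radius_inside _ _ Hc) as Ec. apply ex_pseries_R in Ec.
  eapply Rle_trans. apply Series_le with (b := fun n => cos_n n * (-y)^n).
  - intro n. split. apply Rabs_pos.
    rewrite Rabs_mult. rewrite <- RPow_abs, (Rabs_right y) by lra.
    replace (cos_n n * (- y) ^ n) with (/ INR (fact (2*n)) * y^n).
    apply Rmult_le_compat_r. apply pow_le; lra. apply Dk_bound.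
    unfold cos_n. replace (-y) with ((-1)*y) by ring. rewrite Rpow_mult_distr. unfold Rdiv.
    replace ((-1) ^ n * / INR (fact (2 * n)) * ((-1) ^ n * y ^ n)) with
      (((-1) * (-1))^n * / INR (fact (2 * n)) * y ^ n) by (rewrite Rpow_mult_distr; ring).
    replace ((-1) * (-1)) with 1 by ring. rewrite pow1. ring.
  - exact Ec.
  - assert (Series (fun n => cos_n n * (- y) ^ n) = Cf 0 (-y)).
    { unfold Cf. rewrite PSeries_R_eq. reflexivity. }
    rewrite H. replace (-y) with (- (sqrt y)^2) by (rewrite pow2_sqrt; lra).
    rewrite <- cosh_Cf. unfold cosh.
    assert (exp (- sqrt y) <= exp (sqrt y)).
    { apply exp_le_exp. pose proof (sqrt_pos y); lra. }
    lra.
Qed.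


Lemma dpl_comp : forall f g x df dg, derivable_pt_lim f (g x) df -> derivable_pt_lim g x dg ->
  derivable_pt_lim (fun y => f (g y)) x (dg * df).
Proof. intros. rewrite Rmult_comm. apply (derivable_pt_lim_comp g f x dg df); auto. Qed.

Lemma dpl_mult : forall f g x df dg, derivable_pt_lim f x df -> derivable_pt_lim g x dg ->
  derivable_pt_lim (fun y => f y * g y) x (df * g x + f x * dg).
Proof. intros. apply (derivable_pt_lim_mult f g x df dg); auto. Qed.

Lemma dpl_plus : forall f g x df dg, derivable_pt_lim f x df -> derivable_pt_lim g x dg ->
  derivable_pt_lim (fun y => f y + g y) x (df + dg).
Proof. intros. apply (derivable_pt_lim_plus f g x df dg); auto. Qed.

Lemma dpl_const : forall c x, derivable_pt_lim (fun _ => c) x 0.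
Proof. intros. apply derivable_pt_lim_const. Qed.

Lemma dpl_ext : forall f g x l, (forall y, f y = g y) -> derivable_pt_lim f x l -> derivable_pt_lim g x l.
Proof. intros f g x l E H. apply derivable_loc with f 1; auto; lra. Qed.

Lemma dpl_eqv : forall f x l l', l = l' -> derivable_pt_lim f x l -> derivable_pt_lim f x l'.
Proof. intros; subst; auto. Qed.

Lemma f_nth : forall r t k, nth_deriv k (fun c => f_fun r c t) 0 = (-(t^2))^k * Cf k (t^2 * r^2).
Proof.
  intros r t k.
  rewrite (nth_deriv_family (fun k c => (-(t^2))^k * Cf k (t^2 * (r^2 - c))) _ (-1) 1).
  - f_equal. f_equal. ring.
  - intros x _. unfold f_fun. rewrite cosqrt_Cf. simpl. ring.
  - intros j x _.
    assert (Hg : derivable_pt_lim (fun c => t^2 * (r^2 - c)) x (-(t^2))).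
    { apply is_derive_Reals. auto_derive. auto. ring. }
    eapply dpl_eqv.
    2:{ apply (dpl_mult (fun _ => (-(t^2))^j) (fun c => Cf j (t^2*(r^2-c)))).
        apply dpl_const.
        apply (dpl_comp (Cf j) (fun c => t^2*(r^2-c))). apply Cf_deriv. exact Hg. }
    simpl; ring.
  - lra.
Qed.

Lemma f_nth_bound : forall r t k, 0 <= r -> 0 <= t ->
  Rabs (nth_deriv k (fun c => f_fun r c t) 0) <= t^(2*k) * exp (t * r).
Proof.
  intros r t k Hr Ht. rewrite f_nth, Rabs_mult.
  apply Rmult_le_compat. apply Rabs_pos. apply Rabs_pos.
  rewrite <- RPow_abs, Rabs_Ropp, Rabs_right by (apply Rle_ge, pow_le; lra).
  rewrite pow_mult. lra.
  eapply Rle_trans. apply Cf_bound. apply Rmult_le_pos; apply pow_le; lra.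
  rewrite <- Rpow_mult_distr, sqrt_pow2. lra. apply Rmult_le_pos; lra.
Qed.


Definition Tay (l : nat) (F : nat -> R -> R) (x : R) : R :=
  sumk l (fun k => F k 0 * x ^ k / INR (fact k)).

Lemma sumk_ext : forall n A B, (forall k, A k = B k) -> sumk n A = sumk n B.
Proof. induction n; intros; simpl; auto. rewrite (IHn A B H), H; auto. Qed.

Lemma Tay_0 : forall l F, Tay (S l) F 0 = F 0%nat 0.
Proof.
  induction l; intros F.
  - unfold Tay. simpl. field.
  - change (Tay (S (S l)) F 0) with (Tay (S l) F 0 + F (S l) 0 * 0^(S l) / INR (fact (S l))).
    rewrite IHl. rewrite pow_i by lia. unfold Rdiv. ring.
Qed.

Lemma Tay_deriv : forall l F x,
  derivable_pt_lim (Tay (S l) F) x (Tay l (fun k => F (S k)) x).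
Proof.
  induction l; intros F x.
  - unfold Tay; simpl sumk. apply dpl_ext with (fun _ => 0 + F 0%nat 0 * 1 / INR (fact 0)).
    intro y. simpl. ring. apply dpl_const.
  - unfold Tay. change (sumk (S (S l)) (fun k => F k 0 * x ^ k / INR (fact k))) with
      (sumk (S l) (fun k => F k 0 * x ^ k / INR (fact k)) + F (S l) 0 * x ^ (S l) / INR (fact (S l))).
    eapply dpl_eqv.
    2:{ apply (dpl_plus (fun y => sumk (S l) (fun k => F k 0 * y ^ k / INR (fact k)))
                   (fun y => F (S l) 0 * y ^ (S l) / INR (fact (S l)))).
        apply IHl.
        apply (dpl_mult (fun y => F (S l) 0 * y ^ (S l)) (fun _ => / INR (fact (S l)))).
        apply (dpl_mult (fun _ => F (S l) 0) (fun y => y ^ (S l))).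
        apply dpl_const. apply derivable_pt_lim_pow. apply dpl_const. }
    unfold Tay. change (sumk (S l) (fun k => F (S k) 0 * x ^ k / INR (fact k))) with
      (sumk l (fun k => F (S k) 0 * x ^ k / INR (fact k)) + F (S l) 0 * x ^ l / INR (fact l)).
    rewrite fact_simpl, mult_INR. simpl pred.
    pose proof (fact_pos_R l). rewrite S_INR. pose proof (pos_INR l). field. lra.
Qed.

Lemma taylor_bound_gen : forall l (F : nat -> R -> R) M,
  (forall k x, -1 < x < 2 -> derivable_pt_lim (F k) x (F (S k) x)) ->
  (forall x, 0 <= x <= 1 -> Rabs (F l x) <= M) ->
  forall x, 0 <= x <= 1 -> Rabs (F 0%nat x - Tay l F x) <= M.
Proof.
  induction l; intros F M HD HB x Hx.
  - unfold Tay. simpl sumk. rewrite Rminus_0_r. apply HB; auto.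
  - assert (HM : 0 <= M) by (eapply Rle_trans; [apply Rabs_pos | apply (HB 0); lra]).
    set (D := fun y => F 0%nat y - Tay (S l) F y).
    set (D' := fun y => F 1%nat y - Tay l (fun k => F (S k)) y).
    assert (HDD : forall c, 0 <= c <= x -> derivable_pt_lim D c (D' c)).
    { intros c Hc. unfold D, D'. apply (dpl_plus (F 0%nat) (fun y => - Tay (S l) F y)).
      apply HD; lra. apply dpl_ext with (fun y => (-1) * Tay (S l) F y). intro; ring.
      eapply dpl_eqv.
      2:{ apply (dpl_mult (fun _ => -1) (Tay (S l) F)). apply dpl_const. apply Tay_deriv. }
      ring. }
    assert (IH : forall c, 0 <= c <= 1 -> Rabs (D' c) <= M).
    { intros c Hc. unfold D'. apply (IHl (fun k => F (S k))); auto.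
      all: intros; apply HD; auto. }
    change (Rabs (D x) <= M).
    destruct (Req_dec x 0) as [Hx0|Hx0].
    + subst x. unfold D. rewrite Tay_0. rewrite Rminus_diag, Rabs_R0. exact HM.
    + destruct (MVT_cor2 D D' 0 x) as [c [Hc1 Hc2]]. lra. exact HDD.
      assert (D 0 = 0) by (unfold D; rewrite Tay_0; ring).
      rewrite H in Hc1. rewrite Rminus_0_r in Hc1. rewrite Hc1, Rminus_0_r, Rabs_mult.
      rewrite (Rabs_right x) by lra.
      assert (Rabs (D' c) <= M) by (apply IH; lra).
      assert (0 <= Rabs (D' c)) by apply Rabs_pos. nra.
Qed.


Definition wf (u a : R) := sqrt (1 - 4 * a * u).
Definition hf (u a : R) := 2 / (1 + wf u a).
Definition phif (u s a : R) := exp (- s * hf u a).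

Ltac fixsq := repeat match goal with |- context [sqrt (1 + - ?x)] => replace (1 + - x) with (1 - x) by ring end.

Lemma wf_pos : forall u a, 0 < 1 - 4 * a * u -> 0 < wf u a.
Proof. intros. unfold wf. apply sqrt_lt_R0. auto. Qed.

Lemma Dw : forall u a, 0 < 1 - 4 * a * u -> derivable_pt_lim (wf u) a (-2 * u / wf u a).
Proof.
  intros u a H. pose proof (wf_pos u a H). apply is_derive_Reals. unfold wf in *.
  auto_derive; [repeat split; fixsq; lra | fixsq; field; lra].
Qed.

Lemma Dh : forall u a, 0 < 1 - 4 * a * u -> derivable_pt_lim (hf u) a (u * hf u a ^ 2 * / wf u a).
Proof.
  intros u a H. pose proof (wf_pos u a H). apply is_derive_Reals. unfold hf, wf in *.
  auto_derive; [repeat split; fixsq; lra | fixsq; field; lra].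
Qed.

Lemma Dv : forall u a, 0 < 1 - 4 * a * u -> derivable_pt_lim (fun a => / wf u a) a (2 * u * (/ wf u a) ^ 3).
Proof.
  intros u a H. pose proof (wf_pos u a H). apply is_derive_Reals. unfold wf in *.
  auto_derive; [repeat split; fixsq; lra | fixsq; field; lra].
Qed.

Lemma Dphi : forall u s a, 0 < 1 - 4 * a * u ->
  derivable_pt_lim (phif u s) a (- s * (u * hf u a ^ 2 * / wf u a) * phif u s a).
Proof.
  intros u s a H. unfold phif.
  eapply dpl_eqv. 2: apply (dpl_comp exp (fun a => - s * hf u a)).
  2: apply derivable_pt_lim_exp.
  2:{ eapply dpl_eqv. 2: apply (dpl_mult (fun _ => - s) (hf u)). 2: apply dpl_const. 2: apply Dh; auto.
      reflexivity. }
  ring.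
Qed.

Definition Mon := (R * nat * nat * nat)%type.
Definition mon (u s : R) (M : Mon) (a : R) : R :=
  match M with (c, i, j, m) => c * s ^ i * hf u a ^ j * (/ wf u a) ^ m * phif u s a end.
Definition dmon (M : Mon) : list Mon :=
  match M with (c, i, j, m) =>
    (c * INR j, i, S j, S m) :: (2 * INR m * c, i, j, S (S m)) :: (- c, S i, S (S j), S m) :: nil end.
Definition evalL (u s : R) (L : list Mon) (a : R) : R :=
  fold_right (fun M acc => mon u s M a + acc) 0 L.
Definition dL (L : list Mon) : list Mon := flat_map dmon L.

Lemma Dpow : forall f a f' j, derivable_pt_lim f a f' ->
  derivable_pt_lim (fun a => f a ^ j) a (INR j * f a ^ pred j * f').
Proof.
  intros. eapply dpl_eqv.
  2:{ apply (dpl_comp (fun x => x ^ j) f). apply derivable_pt_lim_pow. eauto. }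
  ring.
Qed.

Lemma Dmon : forall u s M a, 0 < 1 - 4 * a * u ->
  derivable_pt_lim (mon u s M) a (u * evalL u s (dmon M) a).
Proof.
  intros u s [[[c i] j] m] a H. unfold mon.
  eapply dpl_eqv.
  2:{ apply (dpl_mult (fun a => c * s ^ i * hf u a ^ j * (/ wf u a) ^ m) (phif u s)).
      apply (dpl_mult (fun a => c * s ^ i * hf u a ^ j) (fun a => (/ wf u a) ^ m)).
      apply (dpl_mult (fun _ => c * s ^ i) (fun a => hf u a ^ j)). apply dpl_const.
      apply Dpow, Dh; auto.
      apply (Dpow (fun a => / wf u a)), Dv; auto.
      apply Dphi; auto. }
  unfold evalL, dmon, mon. cbn [fold_right].
  destruct j as [|j]; destruct m as [|m]; cbn [pred pow]; change (INR 0) with 0; ring.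
Qed.

Lemma evalL_app : forall u s L1 L2 a, evalL u s (L1 ++ L2) a = evalL u s L1 a + evalL u s L2 a.
Proof. induction L1; intros; simpl. ring. unfold evalL in *. rewrite IHL1. ring. Qed.

Lemma DevalL : forall u s L a, 0 < 1 - 4 * a * u ->
  derivable_pt_lim (evalL u s L) a (u * evalL u s (dL L) a).
Proof.
  intros u s L a H. induction L as [|M L IH].
  - unfold evalL, dL. simpl. eapply dpl_eqv. 2: apply dpl_const. ring.
  - unfold dL. simpl flat_map. rewrite evalL_app.
    eapply dpl_eqv.
    2:{ apply (dpl_plus (mon u s M) (evalL u s L)). apply Dmon; auto. exact IH. }
    unfold dL. ring.
Qed.

Definition Lk (k : nat) : list Mon := Nat.iter k dL ((1, 0%nat, 0%nat, 0%nat) :: nil).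
Definition Gfam (u s : R) (k : nat) (a : R) : R := u ^ k * evalL u s (Lk k) a.

Lemma Gfam_deriv : forall u s, 0 <= u <= / 9 -> forall k a, -1 < a < 2 ->
  derivable_pt_lim (Gfam u s k) a (Gfam u s (S k) a).
Proof.
  intros u s Hu k a Ha. unfold Gfam.
  assert (H : 0 < 1 - 4 * a * u) by nra.
  eapply dpl_eqv.
  2:{ apply (dpl_mult (fun _ => u ^ k) (evalL u s (Lk k))). apply dpl_const. apply DevalL; auto. }
  change (Lk (S k)) with (dL (Lk k)). simpl. ring.
Qed.

Lemma Gfam_0 : forall u s a, Gfam u s 0 a = phif u s a.
Proof. intros. unfold Gfam, Lk, evalL, mon. simpl. ring. Qed.

Definition BL (L : list Mon) : R :=
  fold_right (fun M acc => match M with (c, i, j, m) => Rabs c * 2 ^ j * 2 ^ m end + acc) 0 L.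
Definition NL (L : list Mon) : nat :=
  fold_right (fun M acc => match M with (c, i, j, m) => (i + acc)%nat end) 0%nat L.

Lemma BL_nonneg : forall L, 0 <= BL L.
Proof.
  induction L as [|[[[c i] j] m] L IH]; simpl. lra.
  assert (0 <= Rabs c * 2^j * 2^m). { apply Rmult_le_pos. apply Rmult_le_pos. apply Rabs_pos.
  apply pow_le; lra. apply pow_le; lra. } lra.
Qed.

Lemma evalL_bound : forall u s a, 0 <= u <= / 9 -> 0 <= s -> 0 <= a <= 1 ->
  forall L, Rabs (evalL u s L a) <= BL L * (1 + s) ^ (NL L) * exp (- s).
Proof.
  intros u s a Hu Hs Ha.
  assert (Hw1 : / 2 <= wf u a).
  { unfold wf. rewrite <- (sqrt_pow2 (/2)) by lra. apply sqrt_le_1_alt. nra. }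
  assert (Hw2 : wf u a <= 1).
  { unfold wf. apply Rle_trans with (sqrt 1). apply sqrt_le_1_alt; nra. rewrite sqrt_1; lra. }
  assert (Hv : 0 < / wf u a <= 2).
  { split. apply Rinv_0_lt_compat; lra. rewrite <- (Rinv_inv 2). apply Rinv_le_contravar; lra. }
  assert (Hh : 1 <= hf u a <= 2).
  { unfold hf. split. apply Rle_div_r; lra. apply Rle_div_l; lra. }
  assert (Hp : 0 < phif u s a <= exp (- s)).
  { unfold phif. split. apply exp_pos. apply exp_le_exp. nra. }
  assert (He : 0 < exp (- s)) by apply exp_pos.
  induction L as [|[[[c i] j] m] L IH].
  - simpl. rewrite Rabs_R0. lra.
  - change (evalL u s ((c, i, j, m) :: L) a) with (mon u s (c,i,j,m) a + evalL u s L a).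
    change (BL ((c, i, j, m) :: L)) with (Rabs c * 2 ^ j * 2 ^ m + BL L).
    change (NL ((c, i, j, m) :: L)) with (i + NL L)%nat.
    eapply Rle_trans. apply Rabs_triang.
    assert (P1 : (1 + s) ^ i <= (1 + s) ^ (i + NL L)) by (apply Rle_pow; [lra | lia]).
    assert (P2 : (1 + s) ^ NL L <= (1 + s) ^ (i + NL L)) by (apply Rle_pow; [lra | lia]).
    assert (Hm : Rabs (mon u s (c, i, j, m) a) <= Rabs c * 2 ^ j * 2 ^ m * (1 + s) ^ (i + NL L) * exp (- s)).
    { unfold mon. rewrite !Rabs_mult.
      rewrite <- !RPow_abs. rewrite (Rabs_right s) by lra.
      rewrite (Rabs_right (hf u a)) by lra. rewrite (Rabs_right (/ wf u a)) by lra.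
      rewrite (Rabs_right (phif u s a)) by lra.
      assert (s ^ i <= (1 + s) ^ (i + NL L)).
      { eapply Rle_trans. 2: exact P1. apply pow_incr. lra. }
      assert (hf u a ^ j <= 2 ^ j) by (apply pow_incr; lra).
      assert ((/ wf u a) ^ m <= 2 ^ m) by (apply pow_incr; lra).
      assert (0 <= s ^ i) by (apply pow_le; lra).
      assert (0 <= hf u a ^ j) by (apply pow_le; lra).
      assert (0 <= (/ wf u a) ^ m) by (apply pow_le; lra).
      pose proof (Rabs_pos c).
      replace (Rabs c * 2 ^ j * 2 ^ m * (1 + s) ^ (i + NL L) * exp (- s)) with
        (Rabs c * (1 + s) ^ (i + NL L) * 2 ^ j * 2 ^ m * exp (- s)) by ring.
      apply Rmult_le_compat; try lra.
      repeat apply Rmult_le_pos; lra.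
      apply Rmult_le_compat; try lra. repeat apply Rmult_le_pos; lra.
      apply Rmult_le_compat; try lra. repeat apply Rmult_le_pos; lra.
      apply Rmult_le_compat; try lra. }
    assert (HL : BL L * (1 + s) ^ NL L * exp (- s) <= BL L * (1 + s) ^ (i + NL L) * exp (- s)).
    { apply Rmult_le_compat_r. lra. apply Rmult_le_compat_l. apply BL_nonneg. exact P2. }
    lra.
Qed.


Definition psi (t x : R) : R := / (1 + t * x ^ 2).

Lemma cont_psi : forall t, 0 <= t -> forall x, continuity_pt (psi t) x.
Proof.
  intros t Ht x. apply continuity_pt_filterlim. apply (@ex_derive_continuous R_AbsRing R_NormedModule).
  unfold psi. auto_derive. nra.
Qed.

Lemma psi_pos : forall t x, 0 <= t -> 0 < psi t x <= 1.
Proof.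
  intros t x Ht. unfold psi. assert (0 <= t * x^2) by (apply Rmult_le_pos; [lra | apply pow2_ge_0]).
  split. apply Rinv_0_lt_compat; lra. rewrite <- Rinv_1. apply Rinv_le_contravar; lra.
Qed.

Lemma I_val : forall t, 0 < t -> forall pr : Riemann_integrable (psi t) (-1) 1,
  RiemannInt pr = 2 * atan (sqrt t) / sqrt t.
Proof.
  intros t Ht pr.
  assert (Hs : 0 < sqrt t) by (apply sqrt_lt_R0; auto).
  pose proof (ex_RInt_Reals_aux_1 _ _ _ pr) as H1.
  assert (H2 : is_RInt (psi t) (-1) 1
     (minus ((fun x => atan (sqrt t * x) / sqrt t) 1) ((fun x => atan (sqrt t * x) / sqrt t) (-1)))).
  { apply (@is_RInt_derive R_CompleteNormedModule (fun x => atan (sqrt t * x) / sqrt t)).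
    - intros x _. unfold psi. auto_derive. lra.
      assert (Hss : sqrt t * sqrt t = t) by (apply sqrt_sqrt; lra).
      replace (sqrt t * x * (sqrt t * x * 1)) with ((sqrt t * sqrt t) * x^2) by ring.
      rewrite Hss. assert (0 <= t * x^2) by (apply Rmult_le_pos; [lra | apply pow2_ge_0]).
      field; repeat split; lra.
    - intros x _. apply continuity_pt_filterlim. apply cont_psi. lra. }
  simpl in H2.
  apply (@is_RInt_unique R_CompleteNormedModule) in H1. apply (@is_RInt_unique R_CompleteNormedModule) in H2. rewrite H1 in H2. rewrite H2.
  unfold minus, plus, opp. simpl. rewrite Rmult_1_r.
  replace (sqrt t * -1) with (- sqrt t) by ring. rewrite atan_opp. field. lra.
Qed.

Lemma I_bound : forall t, 0 < t -> forall pr : Riemann_integrable (psi t) (-1) 1,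
  0 <= RiemannInt pr <= PI / sqrt t.
Proof.
  intros t Ht pr. rewrite I_val by auto.
  assert (Hs : 0 < sqrt t) by (apply sqrt_lt_R0; auto).
  pose proof (atan_bound (sqrt t)).
  assert (0 < atan (sqrt t)) by (rewrite <- atan_0; apply atan_increasing; auto).
  split. apply Rmult_le_pos. lra. apply Rlt_le, Rinv_0_lt_compat; auto.
  unfold Rdiv. apply Rmult_le_compat_r. apply Rlt_le, Rinv_0_lt_compat; auto. lra.
Qed.

Lemma RInt_eq : forall f a b (pr : Riemann_integrable f a b), Defs.RInt f a b = RiemannInt pr.
Proof.
  intros. unfold Defs.RInt. destruct (excluded_middle_informative _) as [E|E].
  - destruct (constructive_indefinite_description _ E) as [pr' Hpr]. simpl. apply RiemannInt_P5.
  - exfalso; apply E; exists pr; auto.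
Qed.

Lemma Rint0 : Riemann_integrable (fun _ => 0) (-1) 1.
Proof. apply continuity_implies_RiemannInt. lra. intros; apply continuity_pt_const. intros ? ?; reflexivity. Qed.

Lemma RiemannInt_nonneg : forall f (pr : Riemann_integrable f (-1) 1),
  (forall x, -1 < x < 1 -> 0 <= f x) -> 0 <= RiemannInt pr.
Proof.
  intros f pr H. pose proof (RiemannInt_P19 Rint0 pr) as P.
  rewrite (RiemannInt_const 0 (-1) 1 Rint0) in P.
  replace 0 with (0 * (1 - -1)) by ring. apply P. lra. auto.
Qed.

Lemma RInt_nonneg : forall f, (forall x, -1 < x < 1 -> 0 <= f x) -> 0 <= Defs.RInt f (-1) 1.
Proof.
  intros f H. unfold Defs.RInt. destruct (excluded_middle_informative _) as [E|E].
  - destruct (constructive_indefinite_description _ E) as [pr' Hpr]. simpl.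
    apply RiemannInt_nonneg; auto.
  - lra.
Qed.

Lemma RInt_le : forall f g (prg : Riemann_integrable g (-1) 1),
  (forall x, -1 < x < 1 -> 0 <= f x <= g x) -> Defs.RInt f (-1) 1 <= RiemannInt prg.
Proof.
  intros f g prg H. unfold Defs.RInt. destruct (excluded_middle_informative _) as [E|E].
  - destruct (constructive_indefinite_description _ E) as [pr' Hpr]. simpl.
    apply RiemannInt_P19. lra. intros; apply H; auto.
  - apply RiemannInt_nonneg. intros x Hx; specialize (H x Hx); lra.
Qed.

Definition prodl (p : R -> R) (v : list R) : R := fold_right (fun x acc => p x * acc) 1 v.

Lemma box_bound : forall t, 0 < t -> forall (prI : Riemann_integrable (psi t) (-1) 1),
  forall n F A c, 0 <= A -> 0 <= c ->
  (forall v, 0 <= F v <= A + c * prodl (psi t) v) ->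
  0 <= box_int n F <= 2 ^ n * A + c * (RiemannInt prI) ^ n.
Proof.
  intros t Ht prI. pose proof (I_bound t Ht prI) as HI.
  induction n; intros F A c HA Hc HF.
  - simpl. specialize (HF nil). simpl in HF. lra.
  - simpl box_int.
    assert (HG : forall x, 0 <= box_int n (fun v => F (x :: v)) <=
                 2 ^ n * A + (c * psi t x) * RiemannInt prI ^ n).
    { intro x. apply IHn; auto. apply Rmult_le_pos; auto. apply Rlt_le, psi_pos; lra.
      intro v. specialize (HF (x :: v)). simpl in HF. rewrite Rmult_assoc. exact HF. }
    set (K := c * RiemannInt prI ^ n).
    assert (HK : 0 <= K) by (apply Rmult_le_pos; auto; apply pow_le; lra).
    assert (prc : Riemann_integrable (fun _ => 2 ^ n * A) (-1) 1).
    { apply continuity_implies_RiemannInt. lra. intros; apply continuity_pt_const. intros ? ?; reflexivity. }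
    assert (prg : Riemann_integrable (fun x => 2 ^ n * A + K * psi t x) (-1) 1).
    { apply continuity_implies_RiemannInt. lra. intros. apply continuity_pt_plus.
      apply continuity_pt_const. intros ? ?; reflexivity.
      apply continuity_pt_mult. apply continuity_pt_const. intros ? ?; reflexivity.
      apply cont_psi; lra. }
    split.
    + apply RInt_nonneg. intros x _. apply HG.
    + eapply Rle_trans. apply (RInt_le _ _ prg).
      intros x _. specialize (HG x). unfold K. split. apply HG.
      replace (2 ^ n * A + c * RiemannInt prI ^ n * psi t x) with
        (2 ^ n * A + c * psi t x * RiemannInt prI ^ n) by ring. apply HG.
      rewrite (RiemannInt_P13 prc prI prg). rewrite RiemannInt_const.
      unfold K. simpl. lra.
Qed.


Lemma exp_pow_INR : forall x n, exp x ^ n = exp (INR n * x).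
Proof.
  intros x n. induction n. simpl. rewrite Rmult_0_l, exp_0. auto.
  rewrite S_INR. simpl pow. rewrite IHn. rewrite <- exp_plus. f_equal. ring.
Qed.

Lemma poly_exp : forall p x, 0 <= x -> (1 + x) ^ p <= (2 * INR p + 2) ^ p * exp (x / 2).
Proof.
  intros p x Hx. pose proof (pos_INR p) as Hp.
  set (y := x / (2 * INR p + 2)).
  assert (Hy : 0 <= y) by (unfold y; apply Rdiv_le_0_compat; lra).
  assert (E : 1 + x <= (2 * INR p + 2) * (1 + y)) by (unfold y; field_simplify; lra).
  eapply Rle_trans. apply pow_incr. split. lra. exact E.
  rewrite Rpow_mult_distr. apply Rmult_le_compat_l. apply pow_le; lra.
  eapply Rle_trans. apply pow_incr. split. lra. apply exp_ineq1_le.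
  rewrite exp_pow_INR. apply exp_le_exp. unfold y.
  apply Rle_trans with (INR p * x / (2 * INR p + 2)). right; field; lra.
  apply Rle_div_l. lra. nra.
Qed.

Lemma sumk_abs_bound : forall n A K, (forall k, (k < n)%nat -> Rabs (A k) <= K) ->
  Rabs (sumk n A) <= INR n * K.
Proof.
  induction n; intros A K H. simpl. rewrite Rabs_R0. lra.
  simpl sumk. rewrite S_INR. eapply Rle_trans. apply Rabs_triang.
  assert (Rabs (sumk n A) <= INR n * K) by (apply IHn; intros; apply H; lia).
  assert (Rabs (A n) <= K) by (apply H; lia). lra.
Qed.

Lemma W1_bound : forall b r t, 0 <= r <= / 3 -> 1 <= t ->
  Rabs (W1 b r t) <= INR b * (t ^ (2 * b) * exp (t / 3)).
Proof.
  intros b r t Hr Ht. unfold W1. apply sumk_abs_bound. intros k Hk.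
  rewrite !Rabs_mult.
  assert (H1 : Rabs ((/ 4) ^ k) <= 1).
  { rewrite <- RPow_abs, Rabs_right by lra. rewrite <- (pow1 k). apply pow_incr. lra. }
  assert (H2 : Rabs (/ INR (fact k)) <= 1).
  { rewrite Rabs_right. rewrite <- Rinv_1. apply Rinv_le_contravar. lra.
    apply (le_INR 1). apply lt_O_fact. apply Rle_ge, Rlt_le, Rinv_0_lt_compat, fact_pos_R. }
  assert (H3 : Rabs (nth_deriv k (fun c => f_fun r c t) 0) <= t ^ (2 * b) * exp (t / 3)).
  { eapply Rle_trans. apply f_nth_bound; lra. apply Rmult_le_compat.
    apply pow_le; lra. apply Rlt_le, exp_pos. apply Rle_pow. lra. lia.
    apply exp_le_exp. nra. }
  assert (0 <= t ^ (2 * b) * exp (t / 3)) by (apply Rmult_le_pos; [apply pow_le; lra | apply Rlt_le, exp_pos]).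
  pose proof (Rabs_pos ((/4)^k)). pose proof (Rabs_pos (/ INR (fact k))).
  pose proof (Rabs_pos (nth_deriv k (fun c => f_fun r c t) 0)).
  rewrite <- (Rmult_1_l (t ^ (2 * b) * exp (t / 3))). rewrite <- (Rmult_1_l 1).
  apply Rmult_le_compat; try lra. apply Rmult_le_pos; lra.
  apply Rmult_le_compat; lra.
Qed.

Lemma g_phif : forall r a t, g_fun r a t = phif (r ^ 2) (t * r ^ 2) a.
Proof. intros. unfold g_fun, phif, hf, wf. f_equal. unfold Rdiv. ring. Qed.

Lemma g_nth : forall r t k, 0 <= r <= / 3 ->
  nth_deriv k (fun a => g_fun r a t) 0 = Gfam (r ^ 2) (t * r ^ 2) k 0.
Proof.
  intros r t k Hr.
  apply (nth_deriv_family (Gfam (r^2) (t * r^2)) _ (-1) 2).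
  - intros x _. rewrite Gfam_0. apply g_phif.
  - intros; apply Gfam_deriv; auto. split. nra. nra.
  - lra.
Qed.

Lemma D1_Tay : forall l r t, 0 <= r <= / 3 ->
  D1 l r t = / 2 * Tay l (Gfam (r ^ 2) (t * r ^ 2)) 1.
Proof.
  intros. unfold D1, Tay. f_equal. apply sumk_ext. intro k.
  rewrite g_nth by auto. rewrite pow1. field. apply Rgt_not_eq, fact_pos_R.
Qed.

Lemma g_rem : forall l r t, 0 <= r <= / 3 -> 0 <= t ->
  Rabs (g_fun r 1 t - Tay l (Gfam (r ^ 2) (t * r ^ 2)) 1) <=
  (r ^ 2) ^ l * BL (Lk l) * (1 + t * r ^ 2) ^ (NL (Lk l)) * exp (- (t * r ^ 2)).
Proof.
  intros l r t Hr Ht.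
  assert (Hu : 0 <= r ^ 2 <= / 9) by (split; nra).
  rewrite g_phif. rewrite <- (Gfam_0 (r^2) (t * r^2) 1).
  apply taylor_bound_gen.
  - intros; apply Gfam_deriv; auto.
  - intros x Hx. unfold Gfam. rewrite Rabs_mult. rewrite <- RPow_abs, (Rabs_right (r^2)) by lra.
    rewrite !Rmult_assoc. apply Rmult_le_compat_l. apply pow_le; lra.
    rewrite <- !Rmult_assoc. apply evalL_bound; auto. apply Rmult_le_pos; lra.
  - lra.
Qed.

Lemma cosh_part : forall r t, 0 <= r <= / 3 ->
  exp (- t / 2) * cosqrt t (r ^ 2 - / 4) =
  (g_fun r 1 t + exp (- t / 2 - t * sqrt (- (r ^ 2 - / 4)))) / 2.
Proof.
  intros r t Hr. unfold cosqrt. destruct (Rle_dec 0 (r ^ 2 - / 4)) as [H|H].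
  { exfalso. nra. }
  set (sg := sqrt (- (r ^ 2 - / 4))).
  assert (Hsg : 0 < sg) by (apply sqrt_lt_R0; nra).
  assert (Hsg2 : sg * sg = - (r ^ 2 - / 4)) by (apply sqrt_sqrt; nra).
  assert (Hw : sqrt (1 - 4 * 1 * r ^ 2) = 2 * sg).
  { replace (1 - 4 * 1 * r ^ 2) with ((2 * 2) * (- (r ^ 2 - / 4))) by field.
    rewrite sqrt_mult by nra. rewrite sqrt_square by lra. reflexivity. }
  unfold g_fun. rewrite Hw. unfold cosh.
  replace (- (2 * t * r ^ 2) / (1 + 2 * sg)) with (- t / 2 + t * sg).
  2:{ field_simplify_eq; [|lra]. replace (r^2) with (/4 - sg * sg) by lra. field. }
  rewrite exp_plus. replace (- t / 2 - t * sg) with (- t / 2 + - (t * sg)) by ring.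
  rewrite exp_plus. field.
Qed.

Definition Qf (b : nat) (t : R) : R := exp (- t / 2) * (/ 2 + INR b * (t ^ (2 * b) * exp (t / 3))).
Definition Kc (l : nat) : R :=
  BL (Lk l) * (2 * INR (l + NL (Lk l)) + 2) ^ (l + NL (Lk l)).

Lemma Kc_nonneg : forall l, 0 <= Kc l.
Proof.
  intro l. unfold Kc. apply Rmult_le_pos. apply BL_nonneg. apply pow_le. pose proof (pos_INR (l + NL (Lk l))). lra.
Qed.

Lemma Qf_nonneg : forall b t, 1 <= t -> 0 <= Qf b t.
Proof.
  intros. unfold Qf. apply Rmult_le_pos. apply Rlt_le, exp_pos.
  assert (0 <= INR b * (t ^ (2 * b) * exp (t / 3))).
  { apply Rmult_le_pos. apply pos_INR. apply Rmult_le_pos. apply pow_le; lra. apply Rlt_le, exp_pos. }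
  lra.
Qed.

Lemma rem_bound : forall l r t, 0 <= r -> 1 <= t ->
  (r ^ 2) ^ l * BL (Lk l) * (1 + t * r ^ 2) ^ (NL (Lk l)) * exp (- (t * r ^ 2))
  <= Kc l * / t ^ l * exp (- (t * r ^ 2) / 2).
Proof.
  intros l r t Hr Ht. set (s := t * r ^ 2). set (N := NL (Lk l)).
  assert (Hs : 0 <= s) by (unfold s; nra).
  assert (Htl : 0 < t ^ l) by (apply pow_lt; lra).
  assert (Hu : (r ^ 2) ^ l = s ^ l * / t ^ l).
  { unfold s. rewrite Rpow_mult_distr. field. lra. }
  rewrite Hu.
  assert (H1 : s ^ l * (1 + s) ^ N <= (1 + s) ^ (l + N)).
  { rewrite pow_add. apply Rmult_le_compat_r. apply pow_le; lra. apply pow_incr; lra. }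
  assert (H2 : (1 + s) ^ (l + N) <= (2 * INR (l + N) + 2) ^ (l + N) * exp (s / 2)) by (apply poly_exp; auto).
  assert (H3 : exp (s / 2) * exp (- s) = exp (- s / 2)).
  { rewrite <- exp_plus. f_equal. field. }
  pose proof (BL_nonneg (Lk l)) as HB.
  assert (0 < / t ^ l) by (apply Rinv_0_lt_compat; auto).
  assert (0 < exp (- s)) by apply exp_pos.
  replace (s ^ l * / t ^ l * BL (Lk l) * (1 + s) ^ N * exp (- s)) with
    (BL (Lk l) * / t ^ l * exp (- s) * (s ^ l * (1 + s) ^ N)) by ring.
  unfold Kc. fold N.
  replace (BL (Lk l) * (2 * INR (l + N) + 2) ^ (l + N) * / t ^ l * exp (- s / 2)) with
    (BL (Lk l) * / t ^ l * exp (- s) * ((2 * INR (l + N) + 2) ^ (l + N) * exp (s / 2)))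
    by (rewrite <- H3; ring).
  apply Rmult_le_compat_l. apply Rmult_le_pos. apply Rmult_le_pos; lra. lra. lra.
Qed.

Lemma m1_bound : forall (chi : R -> R) X b l r t,
  (forall r, r >= / 3 -> chi r = 0) ->
  (forall r, 0 <= r <= / 3 -> Rabs (chi r) <= X) ->
  0 <= r -> 1 <= t ->
  Rabs (m1 chi b l r t) <= X * (Qf b t + / 2 * Kc l * / t ^ l * exp (- (t * r ^ 2) / 2)).
Proof.
  intros chi X b l r t Hz HX Hr Ht.
  assert (HX0 : 0 <= X) by (eapply Rle_trans; [apply Rabs_pos | apply (HX 0); lra]).
  assert (HR : 0 <= Qf b t + / 2 * Kc l * / t ^ l * exp (- (t * r ^ 2) / 2)).
  { pose proof (Qf_nonneg b t Ht). pose proof (Kc_nonneg l).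
    assert (0 < / t ^ l) by (apply Rinv_0_lt_compat, pow_lt; lra).
    pose proof (exp_pos (- (t * r ^ 2) / 2)).
    assert (0 <= / 2 * Kc l * / t ^ l * exp (- (t * r ^ 2) / 2)).
    { apply Rmult_le_pos. apply Rmult_le_pos. apply Rmult_le_pos. lra. lra. lra. lra. } lra. }
  destruct (Rle_lt_dec (/ 3) r) as [Hr3|Hr3].
  { unfold m1. rewrite Hz by lra. rewrite Rmult_0_l, Rabs_R0. apply Rmult_le_pos; auto. }
  assert (Hr' : 0 <= r <= / 3) by lra.
  unfold m1. rewrite Rabs_mult. apply Rmult_le_compat. apply Rabs_pos. apply Rabs_pos. apply HX; auto.
  rewrite (D1_Tay l r t Hr').
  rewrite Rmult_comm with (r1 := exp (- t / 2)). rewrite <- (Rmult_comm (exp (- t / 2))).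
  rewrite cosh_part by auto.
  set (G := g_fun r 1 t - Tay l (Gfam (r ^ 2) (t * r ^ 2)) 1).
  set (T := Tay l (Gfam (r ^ 2) (t * r ^ 2)) 1) in *.
  set (sg := sqrt (- (r ^ 2 - / 4))).
  assert (HG : Rabs G <= Kc l * / t ^ l * exp (- (t * r ^ 2) / 2)).
  { eapply Rle_trans. apply g_rem; lra. apply rem_bound; lra. }
  assert (HW : Rabs (W1 b r t) <= INR b * (t ^ (2 * b) * exp (t / 3))) by (apply W1_bound; lra).
  assert (He1 : 0 < exp (- t / 2 - t * sg) <= exp (- t / 2)).
  { split. apply exp_pos. apply exp_le_exp. pose proof (sqrt_pos (- (r ^ 2 - / 4))). fold sg in H. nra. }
  assert (He : 0 < exp (- t / 2)) by apply exp_pos.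
  replace ((g_fun r 1 t + exp (- t / 2 - t * sg)) / 2 - exp (- t / 2) * W1 b r t - / 2 * T)
    with (/ 2 * G + / 2 * exp (- t / 2 - t * sg) + (- exp (- t / 2)) * W1 b r t)
    by (unfold G; field).
  eapply Rle_trans. apply Rabs_triang. eapply Rle_trans. apply Rplus_le_compat_r. apply Rabs_triang.
  rewrite !Rabs_mult. rewrite Rabs_Ropp.
  rewrite (Rabs_right (/ 2)) by lra. rewrite (Rabs_right (exp (- t / 2))) by lra.
  rewrite (Rabs_right (exp (- t / 2 - t * sg))) by lra.
  unfold Qf.
  assert (exp (- t / 2) * Rabs (W1 b r t) <= exp (- t / 2) * (INR b * (t ^ (2 * b) * exp (t / 3)))).
  { apply Rmult_le_compat_l; lra. }
  lra.
Qed.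


Lemma chi_bounded : forall chi, smooth chi -> exists X, forall r, 0 <= r <= / 3 -> Rabs (chi r) <= X.
Proof.
  intros chi [F [HF0 HF]].
  assert (Hc : forall x, continuity_pt chi x).
  { intro x. apply derivable_continuous_pt. exists (F 1%nat x). rewrite <- HF0. apply HF. }
  destruct (continuity_ab_maj (fun x => Rabs (chi x)) 0 (/ 3)) as [M [HM _]].
  lra. intros c _. apply (continuity_pt_comp chi Rabs). apply Hc. apply Rcontinuity_abs.
  exists (Rabs (chi M)). intros r Hr. apply HM; auto.
Qed.

Fixpoint sumsq (v : list R) : R := match v with nil => 0 | x :: w => x * x + sumsq w end.

Lemma sumsq_nonneg : forall v, 0 <= sumsq v.
Proof. induction v; simpl. lra. nra. Qed.

Lemma normv_sq : forall v, normv v ^ 2 = sumsq v.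
Proof.
  intro v. unfold normv.
  assert (fold_right (fun x s => x * x + s) 0 v = sumsq v) by (induction v; simpl; auto; rewrite IHv; auto).
  rewrite H. apply pow2_sqrt, sumsq_nonneg.
Qed.

Lemma exp_prodl : forall t, 0 <= t -> forall v, exp (- (t * sumsq v)) <= prodl (psi t) v.
Proof.
  intros t Ht v. induction v as [|x v IH]; simpl.
  - rewrite Rmult_0_r, Ropp_0, exp_0. lra.
  - replace (- (t * (x * x + sumsq v))) with (- (t * x ^ 2) + - (t * sumsq v)) by ring.
    rewrite exp_plus. apply Rmult_le_compat. apply Rlt_le, exp_pos. apply Rlt_le, exp_pos.
    + unfold psi. rewrite exp_Ropp. apply Rinv_le_contravar.
      assert (0 <= t * x^2) by (apply Rmult_le_pos; [lra | apply pow2_ge_0]). lra.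
      apply exp_ineq1_le.
    + exact IH.
Qed.

Lemma P_lower : forall n l t, 1 <= t -> / t ^ (n + l) <= Rpower t (- INR n / 4 - INR l).
Proof.
  intros n l t Ht.
  rewrite <- (Rpower_pow (n + l) t) by lra. rewrite <- Rpower_Ropp. apply Rle_Rpower. lra.
  rewrite plus_INR. pose proof (pos_INR n). lra.
Qed.

Lemma P_sq : forall n l t, 1 <= t ->
  (/ t ^ l) ^ 2 * (/ sqrt t) ^ n = Rpower t (- INR n / 4 - INR l) ^ 2.
Proof.
  intros n l t Ht.
  assert (Ht0 : 0 < t) by lra.
  rewrite <- (Rpower_pow l t) by lra. rewrite <- Rpower_Ropp.
  rewrite <- (Rpower_sqrt t) by lra. rewrite <- Rpower_Ropp.
  assert (forall y k, Rpower t y ^ k = Rpower t (y * INR k)).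
  { intros y k. rewrite <- Rpower_pow by (apply exp_pos). rewrite Rpower_mult. auto. }
  rewrite !H. rewrite <- Rpower_plus. f_equal. simpl INR. field.
Qed.

Lemma Qf_P : forall b n l, exists KQ, 0 <= KQ /\ forall t, 1 <= t ->
  Qf b t <= KQ * Rpower t (- INR n / 4 - INR l).
Proof.
  intros b n l. set (p := (2 * b + (n + l))%nat).
  exists ((/ 2 + INR b) * (3 ^ p * (2 * INR p + 2) ^ p)). split.
  { apply Rmult_le_pos. pose proof (pos_INR b); lra. apply Rmult_le_pos. apply pow_le; lra.
    apply pow_le. pose proof (pos_INR p); lra. }
  intros t Ht. unfold Qf.
  assert (Hb : 0 <= INR b) by apply pos_INR.
  assert (H1 : exp (- t / 2) <= exp (- t / 6)) by (apply exp_le_exp; lra).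
  assert (H2 : exp (- t / 2) * exp (t / 3) = exp (- t / 6)) by (rewrite <- exp_plus; f_equal; field).
  assert (H3 : 1 <= t ^ (2 * b)) by (rewrite <- (pow1 (2*b)); apply pow_incr; lra).
  assert (He : 0 < exp (- t / 6)) by apply exp_pos.
  assert (Hq : exp (- t / 2) * (/ 2 + INR b * (t ^ (2 * b) * exp (t / 3))) <=
               (/ 2 + INR b) * (t ^ (2 * b) * exp (- t / 6))).
  { replace (exp (- t / 2) * (/ 2 + INR b * (t ^ (2 * b) * exp (t / 3)))) with
      (/ 2 * exp (- t / 2) + INR b * (t ^ (2 * b) * (exp (- t / 2) * exp (t / 3)))) by ring.
    rewrite H2. assert (exp (-t/2) <= t ^ (2 * b) * exp (- t / 6)) by nra. nra. }
  eapply Rle_trans. exact Hq.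
  assert (Htp : t ^ (2 * b) = t ^ p * / t ^ (n + l)).
  { unfold p. rewrite pow_add. field. apply pow_nonzero. lra. }
  assert (Hpe : t ^ p * exp (- t / 6) <= 3 ^ p * (2 * INR p + 2) ^ p).
  { assert (t ^ p <= 3 ^ p * (1 + t / 3) ^ p).
    { rewrite <- Rpow_mult_distr. apply pow_incr. lra. }
    pose proof (poly_exp p (t / 3) ltac:(lra)).
    replace (t / 3 / 2) with (t / 6) in H0 by field.
    assert (exp (t / 6) * exp (- t / 6) = 1) by (rewrite <- exp_plus; replace (t / 6 + - t / 6) with 0 by field; apply exp_0).
    assert (0 <= 3 ^ p) by (apply pow_le; lra).
    assert (0 <= (1 + t / 3) ^ p) by (apply pow_le; lra).
    apply Rle_trans with (3 ^ p * (1 + t / 3) ^ p * exp (- t / 6)). nra.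
    apply Rle_trans with (3 ^ p * ((2 * INR p + 2) ^ p * exp (t / 6)) * exp (- t / 6)).
    apply Rmult_le_compat_r. lra. apply Rmult_le_compat_l; lra.
    right. replace (3 ^ p * ((2 * INR p + 2) ^ p * exp (t / 6)) * exp (- t / 6)) with
      (3 ^ p * (2 * INR p + 2) ^ p * (exp (t / 6) * exp (- t / 6))) by ring. rewrite H4. ring. }
  pose proof (P_lower n l t Ht) as HP.
  assert (0 < / t ^ (n + l)) by (apply Rinv_0_lt_compat, pow_lt; lra).
  rewrite Htp.
  replace ((/ 2 + INR b) * (t ^ p * / t ^ (n + l) * exp (- t / 6))) with
    ((/ 2 + INR b) * ((t ^ p * exp (- t / 6)) * / t ^ (n + l))) by ring.
  apply Rle_trans with ((/ 2 + INR b) * ((3 ^ p * (2 * INR p + 2) ^ p) * Rpower t (- INR n / 4 - INR l))).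
  apply Rmult_le_compat_l. lra.
  apply Rmult_le_compat; try lra. apply Rmult_le_pos. apply pow_le; lra. lra.
  right; ring.
Qed.

Theorem proposition3 (n b l : nat) (chi : R -> R) :
  (1 <= n)%nat ->
  smooth chi ->
  (forall r, r >= / 3 -> chi r = 0) ->
  (forall r, 0 <= r <= / 4 -> chi r = 1) ->
  exists C : R, C > 0 /\
    forall t : R, t >= 1 ->
      L2norm n (fun xi => m1 chi b l (normv xi) t)
        <= C * Rpower t (2 * (INR b - 1)) * exp (- t / 2)
           + C * Rpower t (- (INR n) / 4 - INR l).
Proof.
  intros Hn Hs Hz H1.
  destruct (chi_bounded chi Hs) as [X HX].
  assert (HX0 : 0 <= X) by (eapply Rle_trans; [apply Rabs_pos | apply (HX 0); lra]).
  destruct (Qf_P b n l) as [KQ [HKQ HQ]].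
  pose proof (Kc_nonneg l) as HKc.
  set (Z := 2 ^ n * 2 * (X * KQ) ^ 2 + 2 * (X * / 2 * Kc l) ^ 2 * PI ^ n).
  assert (HZ : 0 <= Z).
  { unfold Z. pose proof PI_RGT_0. assert (0 <= 2 ^ n) by (apply pow_le; lra).
    assert (0 <= PI ^ n) by (apply pow_le; lra).
    assert (0 <= (X * KQ) ^ 2) by apply pow2_ge_0.
    assert (0 <= (X * / 2 * Kc l) ^ 2) by apply pow2_ge_0. nra. }
  exists (sqrt Z + 1). split. pose proof (sqrt_pos Z). lra.
  intros t Ht.
  set (P := Rpower t (- INR n / 4 - INR l)).
  assert (HP : 0 < P) by (unfold P, Rpower; apply exp_pos).
  assert (Ht0 : 0 < t) by lra.
  assert (prI : Riemann_integrable (psi t) (-1) 1).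
  { apply continuity_implies_RiemannInt. lra. intros; apply cont_psi; lra. }
  set (a0 := X * Qf b t). set (a1 := X * / 2 * Kc l * / t ^ l).
  assert (Ha0 : 0 <= a0) by (unfold a0; apply Rmult_le_pos; auto; apply Qf_nonneg; lra).
  assert (Htl : 0 < / t ^ l) by (apply Rinv_0_lt_compat, pow_lt; lra).
  assert (Ha1 : 0 <= a1) by (unfold a1; apply Rmult_le_pos; [apply Rmult_le_pos; [apply Rmult_le_pos|]|]; lra).
  assert (HF : forall v, 0 <= (m1 chi b l (normv v) t) ^ 2 <=
                 2 * a0 ^ 2 + 2 * a1 ^ 2 * prodl (psi t) v).
  { intro v. split. apply pow2_ge_0.
    pose proof (m1_bound chi X b l (normv v) t Hz HX (sqrt_pos _) ltac:(lra)) as Hm.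
    set (E := exp (- (t * normv v ^ 2) / 2)) in *.
    assert (HE : 0 < E) by apply exp_pos.
    assert (HE2 : E ^ 2 <= prodl (psi t) v).
    { replace (E ^ 2) with (E * E) by ring. unfold E. rewrite <- exp_plus.
      replace (- (t * normv v ^ 2) / 2 + - (t * normv v ^ 2) / 2) with (- (t * sumsq v))
        by (rewrite normv_sq; field).
      apply exp_prodl; lra. }
    assert (Hm' : Rabs (m1 chi b l (normv v) t) <= a0 + a1 * E).
    { unfold a0, a1. eapply Rle_trans. exact Hm. right; ring. }
    rewrite <- Rsqr_pow2, Rsqr_abs, Rsqr_pow2.
    pose proof (Rabs_pos (m1 chi b l (normv v) t)).
    apply Rle_trans with ((a0 + a1 * E) ^ 2). apply pow_incr; lra.
    assert (0 <= a1 ^ 2) by apply pow2_ge_0.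
    assert ((a0 + a1 * E) ^ 2 <= 2 * a0 ^ 2 + 2 * a1 ^ 2 * E ^ 2).
    { assert (0 <= (a0 - a1 * E) ^ 2) by apply pow2_ge_0. nra. }
    assert (a1 ^ 2 * E ^ 2 <= a1 ^ 2 * prodl (psi t) v) by (apply Rmult_le_compat_l; lra).
    lra. }
  pose proof (box_bound t Ht0 prI n _ (2 * a0 ^ 2) (2 * a1 ^ 2)
                ltac:(pose proof (pow2_ge_0 a0); lra) ltac:(pose proof (pow2_ge_0 a1); lra) HF) as HB.
  pose proof (I_bound t Ht0 prI) as HI.
  set (I := RiemannInt prI) in *.
  assert (HIn : I ^ n <= PI ^ n * (/ sqrt t) ^ n).
  { rewrite <- Rpow_mult_distr. apply pow_incr. lra. }
  assert (Hbox : box_int n (fun v => m1 chi b l (normv v) t ^ 2) <= Z * P ^ 2).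
  { eapply Rle_trans. apply HB.
    assert (Ha0P : a0 ^ 2 <= (X * KQ * P) ^ 2).
    { apply pow_incr. split. auto. unfold a0.
      replace (X * KQ * P) with (X * (KQ * P)) by ring. apply Rmult_le_compat_l; auto.
      apply HQ; lra. }
    assert (Ha1P : a1 ^ 2 * (PI ^ n * (/ sqrt t) ^ n) = (X * / 2 * Kc l) ^ 2 * PI ^ n * P ^ 2).
    { unfold P. rewrite <- P_sq by lra. unfold a1. ring. }
    assert (0 <= a1 ^ 2) by apply pow2_ge_0.
    assert (2 * a1 ^ 2 * I ^ n <= 2 * a1 ^ 2 * (PI ^ n * (/ sqrt t) ^ n)).
    { apply Rmult_le_compat_l; lra. }
    assert (0 <= 2 ^ n) by (apply pow_le; lra).
    assert (2 ^ n * (2 * a0 ^ 2) <= 2 ^ n * (2 * (X * KQ * P) ^ 2)) by (apply Rmult_le_compat_l; lra).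
    unfold Z. replace ((X * KQ * P) ^ 2) with ((X * KQ) ^ 2 * P ^ 2) in * by ring.
    nra. }
  unfold L2norm.
  assert (HL : sqrt (box_int n (fun v => m1 chi b l (normv v) t ^ 2)) <= sqrt Z * P).
  { eapply Rle_trans. apply sqrt_le_1_alt. exact Hbox.
    rewrite sqrt_mult by (auto; apply pow2_ge_0). rewrite sqrt_pow2 by lra. lra. }
  assert (0 <= (sqrt Z + 1) * Rpower t (2 * (INR b - 1)) * exp (- t / 2)).
  { apply Rmult_le_pos. apply Rmult_le_pos. pose proof (sqrt_pos Z); lra.
    unfold Rpower; apply Rlt_le, exp_pos. apply Rlt_le, exp_pos. }
  fold P. nra.
Qed.
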